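(* Let $G$ be a group in which every non-abelian subgroup $H$ satisfies $C_G(H)\le H$, and let $a\in G$ be a non-trivial element of infinite or odd order. If $x\in G$ satisfies $x^{-1}ax=a^{-1}$, then $x$ has finite order which is a power of $2$, and $C_G(\langle a,x\rangle)=\langle x^2\rangle$.
   Context: $C_G(H)$ denotes the centralizer of $H$ in $G$. *)

(* Defs.v *)
(* Abstract (possibly infinite) groups: MathComp's finGroupType only covers
   finite groups, while the statement concerns elements of infinite order. *)
From mathcomp Require Import all_boot.
Set Implicit Arguments. Unset Strict Implicit. Unset Printing Implicit Defensive.

Structure AbsGroup := {
  gcar :> Type;
  gmul : gcar -> gcar -> gcar;
  gone : gcar;
  ginv : gcar -> gcar;
  gmulA : forall x y z, gmul x (gmul y z) = gmul (gmul x y) z;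
  gmul1 : forall x, gmul gone x = x;
  gmulV : forall x, gmul (ginv x) x = gone
}.

Section GroupDefs.
Variable G : AbsGroup.

Fixpoint gpow (x : G) (n : nat) : G :=
  match n with 0 => gone G | S k => gmul x (gpow x k) end.

Definition is_subgroup (H : G -> Prop) : Prop :=
  H (gone G) /\ (forall x y, H x -> H y -> H (gmul x y)) /\
  (forall x, H x -> H (ginv x)).

Definition abelian (H : G -> Prop) : Prop :=
  forall x y, H x -> H y -> gmul x y = gmul y x.

Definition centralizer (H : G -> Prop) : G -> Prop :=
  fun g => forall h, H h -> gmul g h = gmul h g.

Definition generated (S : G -> Prop) : G -> Prop :=
  fun g => forall K, is_subgroup K -> (forall s, S s -> K s) -> K g.

Definition has_order (x : G) (n : nat) : Prop :=
  0 < n /\ gpow x n = gone G /\ (forall m, 0 < m -> gpow x m = gone G -> n <= m).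

Definition infinite_order (x : G) : Prop :=
  forall n, 0 < n -> gpow x n <> gone G.

End GroupDefs.

(* Main.v *)
Require Import Defs.
From Stdlib Require Import Classical.
From mathcomp Require Import all_boot all_algebra zify.
Set Implicit Arguments. Unset Strict Implicit. Unset Printing Implicit Defensive.
Import GRing.Theory Num.Theory.

Section Basic.
Variable G : AbsGroup.
Local Notation "x ** y" := (gmul x y) (at level 40, left associativity).
Local Notation one := (gone G).
Local Notation "x ^-1" := (ginv x).

Lemma mulgV (x : G) : x ** x^-1 = one.
Proof.
rewrite -[x ** _]gmul1 -[X in X ** (x ** _)](gmulV (x^-1)).
by rewrite -gmulA (gmulA (x^-1)) gmulV gmul1 gmulV.
Qed.
Lemma mulg1 (x : G) : x ** one = x.
Proof. by rewrite -(gmulV x) gmulA mulgV gmul1. Qed.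
Lemma mulKg (x y : G) : x^-1 ** (x ** y) = y.
Proof. by rewrite gmulA gmulV gmul1. Qed.
Lemma mulKVg (x y : G) : x ** (x^-1 ** y) = y.
Proof. by rewrite gmulA mulgV gmul1. Qed.
Lemma mulgK (x y : G) : y ** x ** x^-1 = y.
Proof. by rewrite -gmulA mulgV mulg1. Qed.
Lemma mulgKV (x y : G) : y ** x^-1 ** x = y.
Proof. by rewrite -gmulA gmulV mulg1. Qed.
Lemma mulgI (x y z : G) : x ** y = x ** z -> y = z.
Proof. by move=> h; rewrite -(mulKg x y) h mulKg. Qed.
Lemma mulIg (x y z : G) : y ** x = z ** x -> y = z.
Proof. by move=> h; rewrite -(mulgK x y) h mulgK. Qed.
Lemma invg_uniq (x y : G) : x ** y = one -> y = x^-1.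
Proof. by move=> h; apply: (mulgI (x := x)); rewrite h mulgV. Qed.
Lemma invgK (x : G) : (x^-1)^-1 = x.
Proof. by symmetry; apply: invg_uniq; rewrite gmulV. Qed.
Lemma invMg (x y : G) : (x ** y)^-1 = y^-1 ** x^-1.
Proof. by symmetry; apply: invg_uniq; rewrite -gmulA (gmulA y) mulgV gmul1 mulgV. Qed.
Lemma invg1 : (one : G)^-1 = one.
Proof. by symmetry; apply: invg_uniq; rewrite mulg1. Qed.
End Basic.
Section Pow.
Variable G : AbsGroup.
Local Notation "x ** y" := (gmul x y) (at level 40, left associativity).
Local Notation one := (gone G).
Local Open Scope ring_scope.

Definition zpow (x : G) (z : int) : G :=
  match z with Posz n => gpow x n | Negz n => ginv (gpow x n.+1) end.

Lemma gpowD (x : G) m n : gpow x (m + n) = gpow x m ** gpow x n.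
Proof. elim: m => [|m IH] /=; first by rewrite gmul1. by rewrite IH gmulA. Qed.

Lemma gpowSr (x : G) n : gpow x n.+1 = gpow x n ** x.
Proof. by rewrite -addn1 gpowD /= mulg1. Qed.

Lemma zpowS (x : G) z : zpow x (z + 1) = zpow x z ** x.
Proof.
case: z => [n|n].
  have -> : (Posz n + 1 = Posz n.+1)%R by lia.
  by rewrite /= -gpowSr.
case: n => [|n].
  by rewrite /= mulg1 gmulV.
have -> : (Negz n.+1 + 1 = Negz n)%R by rewrite !NegzE; lia.
by rewrite /= (invMg x (x ** _)) mulgKV.
Qed.

Lemma zpowN (x : G) z : zpow x (- z) = ginv (zpow x z).
Proof.
case: z => [[|n]|n] /=.
- by rewrite invg1.
- by [].
- by rewrite invgK.
Qed.

Lemma zpowP (x : G) z : zpow x (z - 1) = zpow x z ** ginv x.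
Proof.
have h := zpowS x (z - 1). rewrite subrK in h. by rewrite h mulgK.
Qed.

Lemma zpowD (x : G) i j : zpow x (i + j) = zpow x i ** zpow x j.
Proof.
case: j => n.
  elim: n => [|n IH]; first by rewrite addr0 /= mulg1.
  have -> : Posz n.+1 = Posz n + 1 by lia.
  by rewrite addrA zpowS IH zpowS gmulA.
elim: n => [|n IH].
  have -> : Negz 0 = 0 - 1 by [].
  by rewrite addrA zpowP addr0 /= mulg1.
have -> : Negz n.+1 = Negz n - 1 by rewrite !NegzE; lia.
by rewrite addrA !zpowP IH gmulA.
Qed.

Lemma zpow1 (x : G) : zpow x 1 = x.
Proof. by rewrite /= mulg1. Qed.

Lemma zpow0 (x : G) : zpow x 0 = one.
Proof. by []. Qed.

Lemma gpowM (x : G) i n : gpow (zpow x i) n = zpow x (i * n%:Z).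
Proof.
elim: n => [|n IH]; first by rewrite mulr0.
have -> : Posz n.+1 = Posz n + 1 by lia.
by rewrite /= IH mulrDr mulr1 addrC zpowD.
Qed.

Lemma zpowM (x : G) i t : zpow (zpow x i) t = zpow x (i * t).
Proof.
case: t => n; first exact: gpowM.
by rewrite NegzE mulrN !zpowN; congr ginv; exact: gpowM.
Qed.

Lemma gpow_one n : gpow one n = one.
Proof. by elim: n => //= n ->; rewrite gmul1. Qed.

Lemma zpow_one z : zpow one z = one.
Proof. by case: z => n; rewrite /zpow gpow_one ?invg1. Qed.

Lemma gpow_conj (g b c : G) n : g ** b = c ** g -> g ** gpow b n = gpow c n ** g.
Proof.
move=> h; elim: n => [|n IH] /=; first by rewrite gmul1 mulg1.
by rewrite gmulA h -gmulA IH gmulA.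
Qed.

Lemma zpow_conj (g b c : G) z : g ** b = c ** g -> g ** zpow b z = zpow c z ** g.
Proof.
move=> h; case: z => n; first exact: gpow_conj.
have e := gpow_conj n.+1 h.
rewrite /zpow; move: e; move: (gpow b n.+1) (gpow c n.+1) => P Q e.
by rewrite -[g ** ginv P](mulKg Q) !gmulA -(gmulA _ Q g) -e gmulA mulgK.
Qed.

Lemma zpow_inv (b : G) z : zpow (ginv b) z = zpow b (- z).
Proof.
have -> : ginv b = zpow b (-1) by rewrite zpowN zpow1.
by rewrite zpowM mulN1r.
Qed.

Lemma zpowC (x : G) i : zpow x i ** x = x ** zpow x i.
Proof. by rewrite -zpowS addrC zpowD zpow1. Qed.

End Pow.
Section Sub.
Variable G : AbsGroup.
Local Notation "x ** y" := (gmul x y) (at level 40, left associativity).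
Local Notation one := (gone G).
Local Open Scope ring_scope.

Lemma gen_sub (S : G -> Prop) : is_subgroup (generated S).
Proof.
split; first by move=> K [].
split.
  by move=> x y hx hy K hK hS; have [_ [hM _]] := hK; apply: hM; [exact: hx|exact: hy].
by move=> x hx K hK hS; have [_ [_ hI]] := hK; apply: hI; exact: hx.
Qed.

Lemma gen_in (S : G -> Prop) s : S s -> generated S s.
Proof. by move=> hs K _ hS; apply: hS. Qed.

Lemma gen_min (S K : G -> Prop) : is_subgroup K -> (forall s, S s -> K s) ->
  forall g, generated S g -> K g.
Proof. by move=> hK hS g hg; apply: hg. Qed.

Lemma sub_zpow (K : G -> Prop) h t : is_subgroup K -> K h -> K (zpow h t).
Proof.
move=> [h1 [hM hI]] hh.
have hp : forall n, K (gpow h n) by elim=> [|n IH] //=; apply: hM.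
by case: t => n; rewrite /zpow; [apply: hp | apply: hI; apply: hp].
Qed.

Lemma cent_sub (H : G -> Prop) : is_subgroup (centralizer H).
Proof.
split; first by move=> h _; rewrite gmul1 mulg1.
split.
  by move=> x y hx hy h hh; rewrite -gmulA hy // gmulA hx // -gmulA.
move=> x hx h hh.
have := zpow_conj (-1) (esym (hx h hh)).
by rewrite zpowN zpow1.
Qed.

Lemma order_dvd (x : G) n z : has_order x n -> (zpow x z = one <-> (n%:Z %| z)%Z).
Proof.
move=> [n0 [xn hmin]].
have hq : forall q, zpow x (n%:Z * q) = one.
  by move=> q; rewrite -zpowM [zpow x n]/= xn zpow_one.
split; last first.
  by move/dvdzP=> [q ->]; rewrite mulrC hq.
move=> hz.
have nz : n%:Z != 0 by rewrite eqz_nat -lt0n.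
have hr := modz_ge0 z nz.
have hlt := ltz_mod z nz.
have e := divz_eq z n%:Z.
rewrite e mulrC zpowD hq gmul1 in hz.
apply/dvdz_mod0P.
case E: (z %% n%:Z)%Z hr hlt hz => [r|r] //= _ hlt hz.
case: r E hlt hz => [//|r] E hlt hz.
have := hmin r.+1 isT hz. move: hlt; rewrite /=. lia.
Qed.

Lemma order_exists (x : G) N : (0 < N)%N -> gpow x N = one -> exists n, has_order x n.
Proof.
elim/ltn_ind: N => N IH hN hxN.
case: (classic (exists m, (0 < m)%N /\ (m < N)%N /\ gpow x m = one)).
  by move=> [m [hm [hmN hxm]]]; apply: (IH m).
move=> hno; exists N; split=> //; split=> // m hm hxm.
case: (leqP N m) => // hmN; exfalso; apply: hno; exists m; auto.
Qed.

Lemma zpow_pos_one (x : G) z : zpow x z = one -> z <> 0 ->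
  exists N, (0 < N)%N /\ gpow x N = one.
Proof.
case: z => [[|n]|n] //= h _.
  by exists n.+1.
exists n.+1; split => //.
by rewrite -(invgK (gpow x n.+1)) h invg1.
Qed.

End Sub.
Section Main.
Variable G : AbsGroup.
Local Notation "x ** y" := (gmul x y) (at level 40, left associativity).
Local Notation one := (gone G).
Local Open Scope ring_scope.
Variables (a x : G).
Hypothesis ha1 : a <> one.
Hypothesis hao : infinite_order a \/ exists n, odd n /\ has_order a n.
Hypothesis hx : gmul (gmul (ginv x) a) x = ginv a.

Lemma sqrt_one i : zpow a (2 * i) = one -> zpow a i = one.
Proof.
case: hao => [hinf|[n [hn hord]]] h.
  case: (classic (i = 0)) => [->//|hi].
  have [N [hN hNe]] := zpow_pos_one h (ltac:(lia)).
  by case: (hinf N hN).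
apply/(order_dvd i hord).
have := (iffLR (order_dvd (2 * i) hord) h).
by rewrite Gauss_dvdzr // coprimezE /= coprimen2.
Qed.

Lemma a_ninv : ginv a <> a.
Proof.
move=> e; apply: ha1.
rewrite -(zpow1 a); apply: sqrt_one.
by rewrite /= mulg1 -{2}e mulgV.
Qed.

Lemma hxa : x ** a = ginv a ** x.
Proof.
have e : x ** ginv a = a ** x by rewrite -hx !gmulA mulgV gmul1.
have := zpow_conj (-1) e.
by rewrite zpow_inv opprK zpow1 zpowN zpow1.
Qed.

Lemma x2a : zpow x 2 ** a = a ** zpow x 2.
Proof.
have e : x ** ginv a = a ** x.
  by rewrite -hx !gmulA mulgV gmul1.
by rewrite /= !mulg1 -(gmulA x x a) hxa gmulA e -gmulA.
Qed.

Lemma CJ t k : zpow x (2 * t) ** zpow a k = zpow a k ** zpow x (2 * t) /\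
  zpow x (2 * t + 1) ** zpow a k = zpow a (- k) ** zpow x (2 * t + 1).
Proof.
have h0 : zpow x (2 * t) ** a = a ** zpow x (2 * t).
  rewrite -zpowM; symmetry; apply: zpow_conj; symmetry; exact: x2a.
split; first exact: zpow_conj.
rewrite -zpow_inv; apply: zpow_conj.
have h1 : zpow x (2 * t) ** ginv a = ginv a ** zpow x (2 * t).
  have := zpow_conj (-1) h0. by rewrite zpowN zpow1.
by rewrite zpowD zpow1 -gmulA hxa gmulA h1 gmulA.
Qed.

Lemma parity (j : int) : exists t, j = 2 * t \/ j = 2 * t + 1.
Proof.
exists (j %/ 2)%Z.
have e := divz_eq j 2.
have h1 := modz_ge0 j (ltac:(by []) : (2:int) != 0).
have h2 := ltz_mod j (ltac:(by []) : (2:int) != 0).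
move: h2; rewrite /=; lia.
Qed.

Lemma CJ' j : exists e : int, (e = 1 \/ e = -1) /\
  forall k, zpow x j ** zpow a k = zpow a (e * k) ** zpow x j.
Proof.
have [t [->|->]] := parity j.
  by exists 1; split; [left|move=> k; rewrite mul1r; case: (CJ t k)].
by exists (-1); split; [right|move=> k; rewrite mulN1r; case: (CJ t k)].
Qed.

Definition Sm (m : int) : G -> Prop :=
  fun g => exists i j, g = zpow a i ** zpow x (m * j).

Lemma Sm_sub m : is_subgroup (Sm m).
Proof.
split; first by exists 0, 0; rewrite mulr0 /= gmul1.
split.
  move=> g h [i [j ->]] [k [l ->]].
  have [e [_ he]] := CJ' (m * j).
  exists (i + e * k), (j + l).
  by rewrite -gmulA (gmulA (zpow x _)) he mulrDr !zpowD !gmulA.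
move=> g [i [j ->]].
have [e [_ he]] := CJ' (m * - j).
exists (e * - i), (- j).
by rewrite invMg -!zpowN -he mulrN.
Qed.

Lemma Sm_a m : Sm m a.
Proof. by exists 1, 0; rewrite mulr0 zpow1 mulg1. Qed.

Lemma Sm_x m : Sm m (zpow x m).
Proof. by exists 0, 1; rewrite mulr1 gmul1. Qed.

Lemma ai_comm i : zpow a i ** x = x ** zpow a i -> zpow a i = one.
Proof.
move=> h; apply: sqrt_one.
have [_ e] := CJ 0 i.
rewrite mulr0 add0r zpow1 in e.
rewrite e in h.
have h' := mulIg h.
have -> : 2 * i = i + i by lia.
by rewrite zpowD {1}h' -zpowD addNr.
Qed.


Lemma nonab m t (S : G -> Prop) : m = 2 * t + 1 -> S a -> S (zpow x m) ->
  ~ abelian (generated S).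
Proof.
move=> hm ha hxm hab.
have := hab a (zpow x m) (gen_in ha) (gen_in hxm).
have [_ e] := CJ t 1.
rewrite -hm zpow1 zpowN zpow1 in e.
by rewrite e => /mulIg /esym; exact: a_ninv.
Qed.

Lemma x2_cent (S : G -> Prop) : (forall s, S s -> s = a \/ exists z, s = zpow x z) ->
  forall h, generated S h -> zpow x 2 ** h = h ** zpow x 2.
Proof.
move=> hS h hh.
have hc : centralizer (fun y => y = zpow x 2) h.
  apply: (gen_min (cent_sub _) _ hh).
  move=> s /hS [->|[z ->]] y ->; first by rewrite x2a.
  by rewrite -!zpowD addrC.
by rewrite (hc (zpow x 2) erefl).
Qed.

Lemma gen_Sm m (S : G -> Prop) : (forall s, S s -> s = a \/ s = zpow x m) ->
  forall g, generated S g -> Sm m g.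
Proof.
move=> hS g hg; apply: (gen_min (Sm_sub m) _ hg).
by move=> s /hS [->|->]; [exact: Sm_a | exact: Sm_x].
Qed.

Hypothesis hG : forall H : G -> Prop, is_subgroup H -> ~ abelian H ->
          forall g, centralizer H g -> H g.

Lemma KS m t : m = 2 * t + 1 -> exists j, zpow x (2 - m * j) = one.
Proof.
move=> hm.
pose S := fun y => y = a \/ y = zpow x m.
have hgen : generated S (zpow x 2).
  apply: hG; first exact: gen_sub.
    exact: (nonab (S := S) hm (or_introl erefl) (or_intror erefl)).
  move=> h hh; apply: (x2_cent _ hh).
  by move=> s [->|->]; [left | right; exists m].
have [i [j e]] := gen_Sm (S := S) (fun s h => h) hgen.
exists j.
have e2 : zpow a i = zpow x (2 - m * j) by rewrite zpowD zpowN e mulgK.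
rewrite -e2; apply: ai_comm.
by rewrite e2 zpowC.
Qed.

Lemma decomp n : (0 < n)%N -> exists k q, odd q /\ n = (2 ^ k * q)%N.
Proof.
elim/ltn_ind: n => n IH hn.
case hod: (odd n); first by exists 0%N, n; rewrite expn0 mul1n.
have e := odd_double_half n; rewrite hod add0n in e.
rewrite -muln2 in e.
have h1 : (n./2 < n)%N by lia.
have h2 : (0 < n./2)%N by lia.
have [k [q [hq e2]]] := IH _ h1 h2.
by exists k.+1, q; split => //; rewrite -e e2 expnS; lia.
Qed.

Lemma x_order : exists k, has_order x (2 ^ k)%N.
Proof.
have [j hj] := KS (m := 3) (t := 1) (ltac:(by [])).
have [N [hN hNe]] := zpow_pos_one hj (ltac:(lia)).
have [n hn] := order_exists hN hNe.
have [k [q [hq hnq]]] := decomp (proj1 hn).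
exists k; suff q1 : q = 1%N by rewrite hnq q1 muln1 in hn.
have eq := odd_double_half q; rewrite hq in eq.
have [j' hj'] := KS (m := q%:Z) (t := (q./2)%:Z) (ltac:(lia)).
have h1 := iffLR (order_dvd _ hn) hj'.
have hqn : (q%:Z %| n%:Z)%Z by rewrite hnq PoszM; apply: dvdz_mull; exact: dvdzz.
move: (dvdz_trans hqn h1) => /dvdzP [c hc].
have hq0 : (0 < q)%N by move: hq; case: (q).
have hw : (2 = (c + j') * q%:Z)%R by rewrite mulrDl -hc; lia.
have hq2 : (q%:Z <= 2)%R.
  case: (lerP (c + j') 0) => hcw.
    have : ((c + j') * q%:Z <= 0)%R by rewrite mulr_le0_ge0.
    lia.
  have : (q%:Z <= (c + j') * q%:Z)%R.
    by rewrite ler_peMl // ; lia.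
  lia.
rewrite -muln2 in eq. lia.
Qed.

Lemma cent_eq g : centralizer (generated (fun y => y = a \/ y = x)) g <->
  generated (fun y => y = gpow x 2) g.
Proof.
pose S1 := fun y => y = a \/ y = x.
split.
  move=> hc.
  have hg : generated S1 g.
    apply: hG => //; first exact: gen_sub.
    apply: (nonab (m := 1) (t := 0)) => //; [by left | by right; rewrite zpow1].
  have [i [j eg]] := gen_Sm (m := 1) (S := S1)
     (fun s h => match h with or_introl h => or_introl h
                   | or_intror h => or_intror (etrans h (esym (zpow1 x))) end) hg.
  rewrite mul1r in eg.
  have hcx := hc x (gen_in (or_intror erefl)).
  have hca := hc a (gen_in (or_introl erefl)).
  have ai1 : zpow a i = one.
    apply: ai_comm; apply: (mulIg (x := zpow x j)).
    by move: hcx; rewrite eg -gmulA zpowC !gmulA.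
  rewrite ai1 gmul1 in eg; rewrite eg in hca.
  have [t [ej|ej]] := parity j.
    rewrite eg ej -zpowM; apply: (sub_zpow (K := generated (fun y => y = gpow x 2))); first exact: gen_sub.
    exact: gen_in.
  have [_ e] := CJ t 1.
  rewrite -ej zpow1 zpowN zpow1 hca in e.
  by case: a_ninv; apply: esym; apply: (mulIg e).
move=> hg; apply: (gen_min (cent_sub _) _ hg) => s -> h hh.
apply: (x2_cent (S := S1)) hh.
by move=> y [->|->]; [left | right; exists 1; rewrite zpow1].
Qed.

End Main.

Theorem lemma2p6 (G : AbsGroup)
  (hG : forall H : G -> Prop, is_subgroup H -> ~ abelian H ->
          forall g, centralizer H g -> H g)
  (a x : G)
  (ha1 : a <> gone G)
  (hao : infinite_order a \/ exists n, odd n /\ has_order a n)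
  (hx : gmul (gmul (ginv x) a) x = ginv a) :
  (exists k, has_order x (2 ^ k)) /\
  (forall g, centralizer (generated (fun y => y = a \/ y = x)) g <->
             generated (fun y => y = gpow x 2) g).
Proof.
split; first exact: (x_order ha1 hao hx hG).
exact: (cent_eq ha1 hao hx hG).
Qed.
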